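(* Let $G$ be a trigraph containing a fence gadget $F$ attached to a set $S$ and satisfying the attachment rule in $G$. In any partial $4$-sequence from $G$, the first contraction involving a pair consisting of a vertex of $V(F)$ and a vertex of $V(F)\cup S$ can only occur after $S$ has been contracted into a single vertex (i.e., at the moment of that contraction, $S$ is contained in a single part).
   Context: A trigraph $G$ consists of a vertex set $V(G)$ and two disjoint sets of unordered pairs of distinct vertices: black edges and red edges; the red graph is formed by the red edges. Contracting two distinct vertices $u,v$ replaces them by a new vertex $w$ such that, for every other vertex $z$, $wz$ is black if $uz,vz$ are both black, a non-edge if both are non-edges, and red otherwise. A partial $d$-sequence from $G$ is a sequence of trigraphs starting at $G$, each obtained from the previous by one contraction, all of maximum red degree at most $d$. Each vertex $u$ of a later trigraph corresponds to the set $u(G)$ (its part) of vertices of $G$ merged into it; a contraction of $u,u'$ involves a pair $v,v'$ of vertices of $G$ if $v\in u(G),v'\in u'(G)$ or vice versa. A fence gadget is a trigraph $F$ on $A\cup B$, $A=\{a_1,\dots,a_6\}$, $B=\{b_1,\dots,b_6\}$, whose black edges are those of the cycles $a_1a_2a_3a_4a_5a_6a_1$ and $b_1b_2b_3b_4b_5b_6b_1$ together with $b_1a_6$, and whose red edges are $a_ib_i$ for $i\in[6]$ and $a_ib_{i+1}$ for $i\in[5]$. Inside a trigraph $G$, $F$ is attached to a nonempty set $S\subseteq V(G)\setminus V(F)$ if every vertex of $A$ is joined by a black edge to every vertex of $S$ and no vertex of $B$ is adjacent to a vertex of $S$. $F$ satisfies the attachment rule in $G$ if $V(F)$ is the vertex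 set of a connected component of the red graph of $G$ and there is a set $X\subseteq V(G)\setminus(V(F)\cup S)$ such that every vertex of $A$ has exactly $X\cup S$ as its set of neighbours outside $V(F)$, every vertex of $B$ has exactly $X$ as its set of neighbours outside $V(F)$ (all these edges black), and every vertex of $X$ is adjacent to every vertex of $S$. *)

(* Defs.v *)
From mathcomp Require Import all_boot.
Set Implicit Arguments. Unset Strict Implicit. Unset Printing Implicit Defensive.

(* The initial trigraph G: vertex set = the whole finite type V,
   black and red edge relations. *)
Record trigraph (V : finType) := Trigraph { black : rel V; red : rel V }.

Definition wf_trigraph (V : finType) (G : trigraph V) : Prop :=
  [/\ symmetric (black G), symmetric (red G),
      irreflexive (black G), irreflexive (red G) &
      forall x y, ~~ (black G x y && red G x y)].

(* Trigraphs arising along a contraction sequence from G: every vertex is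
   labelled by its part u(G), a subset of V. *)
Record ptrigraph (V : finType) :=
  PTrigraph { pv : {set {set V}}; pb : rel {set V}; pr : rel {set V} }.

Definition lift (V : finType) (G : trigraph V) : ptrigraph V :=
  PTrigraph [set [set x] | x : V]
    (fun X Y => [exists x, exists y, [&& X == [set x], Y == [set y] & black G x y]])
    (fun X Y => [exists x, exists y, [&& X == [set x], Y == [set y] & red G x y]]).

Definition contract (V : finType) (H : ptrigraph V) (u v : {set V}) : ptrigraph V :=
  let w := u :|: v in
  let nonedge x y := ~~ pb H x y && ~~ pr H x y in
  PTrigraph (w |: (pv H :\ u :\ v))
    (fun x y => if x == w then (y != w) && pb H u y && pb H v y
                else if y == w then pb H x u && pb H x v
                else pb H x y)
    (fun x y => if x == w then
                  [&& y != w, ~~ (pb H u y && pb H v y) & ~~ (nonedge u y && nonedge v y)]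
                else if y == w then
                  ~~ (pb H x u && pb H x v) && ~~ (nonedge x u && nonedge x v)
                else pr H x y).

Definition reddeg (V : finType) (H : ptrigraph V) (x : {set V}) : nat :=
  #|[set y in pv H | pr H x y]|.

Definition maxred_le (V : finType) (H : ptrigraph V) (d : nat) : Prop :=
  forall x, x \in pv H -> reddeg H x <= d.

Definition stage (V : finType) (G : trigraph V) (cs : seq ({set V} * {set V})) (i : nat)
  : ptrigraph V :=
  foldl (fun H c => contract H c.1 c.2) (lift G) (take i cs).

Definition contr (V : finType) (cs : seq ({set V} * {set V})) (i : nat) :=
  nth (set0, set0) cs i.

Definition partial_seq (V : finType) (G : trigraph V) (d : nat)
  (cs : seq ({set V} * {set V})) : Prop :=
  (forall i, i < size cs ->
     [/\ (contr cs i).1 \in pv (stage G cs i), (contr cs i).2 \in pv (stage G cs i)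
       & (contr cs i).1 != (contr cs i).2]) /\
  (forall i, i <= size cs -> maxred_le (stage G cs i) d).

Definition involves (V : finType) (c : {set V} * {set V}) (x y : V) : bool :=
  ((x \in c.1) && (y \in c.2)) || ((x \in c.2) && (y \in c.1)).

(* Fence gadget, with 0-based indices: a i = a_{i+1}, b i = b_{i+1}. *)
Definition VF (V : finType) (a b : 'I_6 -> V) : {set V} :=
  [set a i | i : 'I_6] :|: [set b i | i : 'I_6].

Definition is_fence (V : finType) (G : trigraph V) (a b : 'I_6 -> V) : Prop :=
  [/\ injective a, injective b & (forall i j, a i != b j)] /\
  [/\ (forall i j : 'I_6, black G (a i) (a j) = ((i.+1 %% 6 == j) || (j.+1 %% 6 == i))),
      (forall i j : 'I_6, black G (b i) (b j) = ((i.+1 %% 6 == j) || (j.+1 %% 6 == i))) &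
      (forall i j : 'I_6, black G (a i) (b j) = ((i == 5 :> nat) && (j == 0 :> nat)))] /\
  [/\
      (forall i j : 'I_6, red G (a i) (a j) = false),
      (forall i j : 'I_6, red G (b i) (b j) = false) &
      (forall i j : 'I_6, red G (a i) (b j) = ((i == j :> nat) || (j == i.+1 :> nat)))].

Definition adj (V : finType) (G : trigraph V) (x y : V) : bool := black G x y || red G x y.

Definition attached (V : finType) (G : trigraph V) (a b : 'I_6 -> V) (S : {set V}) : Prop :=
  [/\ S != set0, [disjoint S & VF a b],
      (forall i s, s \in S -> black G (a i) s) &
      (forall i s, s \in S -> ~~ adj G (b i) s)].

Definition attachment_rule (V : finType) (G : trigraph V) (a b : 'I_6 -> V) (S : {set V})
  : Prop :=
  (forall x, x \in VF a b -> [set y | connect (red G) x y] = VF a b) /\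
  exists X : {set V},
    [/\ [disjoint X & VF a b :|: S],
        (forall i z, z \notin VF a b -> adj G (a i) z = (z \in X :|: S)) &
        (forall i z, z \in X :|: S -> black G (a i) z)] /\
  [/\
        (forall i z, z \notin VF a b -> adj G (b i) z = (z \in X)),
        (forall i z, z \in X -> black G (b i) z) &
        (forall x s, x \in X -> s \in S -> adj G x s)].

(* Main.v *)
Require Import Defs.
From mathcomp Require Import all_boot.
Set Implicit Arguments. Unset Strict Implicit. Unset Printing Implicit Defensive.

Definition allrel (V : finType) (e : rel V) (P Q : {set V}) : bool :=
  [forall p, forall q, (p \in P) && (q \in Q) ==> e p q].

Lemma allrelP (V : finType) (e : rel V) (P Q : {set V}) :
  reflect (forall p q, p \in P -> q \in Q -> e p q) (allrel e P Q).
Proof.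
apply: (iffP forallP) => [H p q hp hq | H p].
- by move/forallP: (H p) => /(_ q); rewrite hp hq.
- by apply/forallP => q; apply/implyP => /andP [? ?]; apply: H.
Qed.

Lemma allrelUl (V : finType) (e : rel V) (u v Q : {set V}) :
  allrel e (u :|: v) Q = allrel e u Q && allrel e v Q.
Proof.
apply/allrelP/andP => [H|[/allrelP H1 /allrelP H2]].
  by split; apply/allrelP => p q hp hq; apply: H => //; rewrite inE hp ?orbT.
by move=> p q; rewrite inE => /orP [] hp hq; [exact: H1|exact: H2].
Qed.

Lemma allrelUr (V : finType) (e : rel V) (u v P : {set V}) :
  allrel e P (u :|: v) = allrel e P u && allrel e P v.
Proof.
apply/allrelP/andP => [H|[/allrelP H1 /allrelP H2]].
  by split; apply/allrelP => p q hp hq; apply: H => //; rewrite inE hq ?orbT.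
by move=> p q hp; rewrite inE => /orP [] hq; [exact: H1|exact: H2].
Qed.

Lemma allrel1 (V : finType) (e : rel V) x y : allrel e [set x] [set y] = e x y.
Proof.
apply/allrelP/idP => [H | h p q]; first exact: H (set11 x) (set11 y).
by rewrite !inE => /eqP -> /eqP ->.
Qed.

Definition ba (V : finType) (G : trigraph V) := allrel (black G).
Definition na (V : finType) (G : trigraph V) :=
  allrel (fun p q => ~~ black G p q && ~~ red G p q).

Definition pinv (V : finType) (G : trigraph V) (H : ptrigraph V) : Prop :=
  [/\ set0 \notin pv H, (forall x, exists2 P, P \in pv H & x \in P),
      (forall P Q, P \in pv H -> Q \in pv H -> P != Q -> [disjoint P & Q]) &
      (forall P Q, P \in pv H -> Q \in pv H -> P != Q ->
          pb H P Q = ba G P Q /\ pr H P Q = ~~ ba G P Q && ~~ na G P Q)].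

Lemma na_ba (V : finType) (G : trigraph V) (P Q : {set V}) :
  P != set0 -> Q != set0 -> na G P Q -> ~~ ba G P Q.
Proof.
move=> /set0Pn [p hp] /set0Pn [q hq] /allrelP/(_ p q hp hq)/andP[h _].
by apply/allrelP => /(_ p q hp hq); rewrite (negbTE h).
Qed.

Lemma ex1 (V : finType) (e : rel V) x y :
  [exists x', exists y', [&& [set x] == [set x'], [set y] == [set y'] & e x' y']] = e x y.
Proof.
apply/existsP/idP => [[x' /existsP [y' /and3P [/eqP /set1_inj -> /eqP /set1_inj -> h]]] // | h].
by exists x; apply/existsP; exists y; rewrite !eqxx h.
Qed.

Lemma inv_lift (V : finType) (G : trigraph V) : wf_trigraph G -> pinv G (Defs.lift G).
Proof.
case=> _ _ _ _ hbr; split => /=.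
- by apply/imsetP => [[x _ h]]; have := set11 x; rewrite -h inE.
- by move=> x; exists [set x]; [exact: imset_f | exact: set11].
- move=> P Q /imsetP[x _ ->] /imsetP[y _ ->] hne; rewrite disjoints1 inE.
  by apply: contra hne => /eqP ->.
- move=> P Q /imsetP[x _ ->] /imsetP[y _ ->] _.
  rewrite (ex1 (black G)) (ex1 (red G)) /ba /na !allrel1; split => //.
  by move: (hbr x y); case: (black G x y); case: (red G x y).
Qed.

Lemma ne_simpl (b n : bool) : (n -> ~~ b) -> ~~ b && ~~ (~~ b && ~~ n) = n.
Proof. by case: b; case: n => // /(_ isT). Qed.

Lemma in_contract (V : finType) (H : ptrigraph V) (u v y : {set V}) :
  (y \in pv (contract H u v)) = (y == u :|: v) || [&& y != v, y != u & y \in pv H].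
Proof. by rewrite /contract /= in_setU1 !in_setD1. Qed.

Lemma neq_w (V : finType) (G : trigraph V) (H : ptrigraph V) (u v y : {set V}) : pinv G H ->
  u \in pv H -> y \in pv H -> y != u -> y != u :|: v.
Proof.
case=> h0 _ hd _ hu hy hyu; apply/eqP => e.
have: u != set0 by apply: contraNneq h0 => <-.
case/set0Pn => p hp.
have := hd _ _ hy hu hyu; rewrite e => /disjointFr hh.
have hp2 : p \in u :|: v by rewrite inE hp.
by move: (hh p hp2); rewrite hp.
Qed.

Lemma inv_contract (V : finType) (G : trigraph V) (H : ptrigraph V) (u v : {set V}) :
  pinv G H -> u \in pv H -> v \in pv H -> u != v -> pinv G (contract H u v).
Proof.
move=> hinv hu hv huv; have [h0 hc hd hr] := hinv.
have nu : u != set0 by apply: contraNneq h0 => <-.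
have nv : v != set0 by apply: contraNneq h0 => <-.
have old : forall y, y \in pv (contract H u v) -> y != u :|: v ->
    [/\ y \in pv H, y != u, y != v & y != set0].
  move=> y; rewrite in_contract => /orP [->//|/and3P [? ? hy] _]; split => //.
  by apply: contraNneq h0 => <-.
have dW : forall Q, Q \in pv H -> Q != u -> Q != v -> [disjoint u :|: v & Q].
  move=> Q hQ hQu hQv; rewrite -setI_eq0 setIUl.
  rewrite (disjoint_setI0 (hd _ _ hu hQ _)) ?(disjoint_setI0 (hd _ _ hv hQ _)) ?setU0 //;
  by rewrite eq_sym.
have rW : forall Q, Q \in pv H -> Q != u -> Q != v -> Q != set0 ->
    pb (contract H u v) (u :|: v) Q = ba G (u :|: v) Q /\
    pr (contract H u v) (u :|: v) Q = ~~ ba G (u :|: v) Q && ~~ na G (u :|: v) Q.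
  move=> Q hQ hQu hQv hQ0; have hQw := neq_w v hinv hu hQ hQu.
  rewrite /contract /= eqxx hQw /=.
  have hu' : u != Q by rewrite eq_sym.
  have hv' : v != Q by rewrite eq_sym.
  have [e1 e2] := hr _ _ hu hQ hu'.
  have [e3 e4] := hr _ _ hv hQ hv'.
  rewrite e1 e2 e3 e4 !ne_simpl; try exact: na_ba.
  by rewrite /ba /na !allrelUl.
have rW' : forall P, P \in pv H -> P != u -> P != v -> P != set0 ->
    pb (contract H u v) P (u :|: v) = ba G P (u :|: v) /\
    pr (contract H u v) P (u :|: v) = ~~ ba G P (u :|: v) && ~~ na G P (u :|: v).
  move=> P hP hPu hPv hP0; have hPw := neq_w v hinv hu hP hPu.
  rewrite /contract /= (negbTE hPw) eqxx.
  have [e1 e2] := hr _ _ hP hu hPu.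
  have [e3 e4] := hr _ _ hP hv hPv.
  rewrite e1 e2 e3 e4 !ne_simpl; try exact: na_ba.
  by rewrite /ba /na !allrelUr.
split.
- apply/negP; rewrite in_contract => /orP [/eqP e | /and3P [_ _ h]]; last by rewrite h in h0.
  case/set0Pn: nu => p hp.
  have : p \in u :|: v by rewrite inE hp.
  by rewrite -e inE.
- move=> x; have [P hP hx] := hc x.
  case: (boolP ((P == u) || (P == v))) => [/orP [] /eqP e | ].
  + by exists (u :|: v); [rewrite in_contract eqxx | rewrite inE -e hx].
  + by exists (u :|: v); [rewrite in_contract eqxx | rewrite inE -e hx orbT].
  + rewrite negb_or => /andP [hPu hPv]; exists P => //.
    by rewrite in_contract hPu hPv hP orbT.
- move=> P Q hP hQ hPQ.
  case: (eqVneq P (u :|: v)) => [eP|hPw]; case: (eqVneq Q (u :|: v)) => [eQ|hQw].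
  + by rewrite eP eQ eqxx in hPQ.
  + have [hQ' hQu hQv _] := old _ hQ hQw; rewrite eP; exact: dW.
  + have [hP' hPu hPv _] := old _ hP hPw; rewrite eQ disjoint_sym; exact: dW.
  + have [hP' _ _ _] := old _ hP hPw; have [hQ' _ _ _] := old _ hQ hQw; exact: hd.
- move=> P Q hP hQ hPQ.
  case: (eqVneq P (u :|: v)) => [eP|hPw]; case: (eqVneq Q (u :|: v)) => [eQ|hQw].
  + by rewrite eP eQ eqxx in hPQ.
  + have [hQ' hQu hQv hQ0] := old _ hQ hQw; rewrite eP; exact: rW.
  + have [hP' hPu hPv hP0] := old _ hP hPw; rewrite eQ; exact: rW'.
  + have [hP' _ _ _] := old _ hP hPw; have [hQ' _ _ _] := old _ hQ hQw.
    rewrite /contract /= (negbTE hPw) (negbTE hQw); exact: hr.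
Qed.

Lemma stageS (V : finType) (G : trigraph V) cs k : k < size cs ->
  stage G cs k.+1 = contract (stage G cs k) (contr cs k).1 (contr cs k).2.
Proof. by move=> hk; rewrite /stage (take_nth (set0, set0) hk) foldl_rcons. Qed.

Lemma stage0 (V : finType) (G : trigraph V) cs : stage G cs 0 = Defs.lift G.
Proof. by rewrite /stage take0. Qed.

Lemma inv_stage (V : finType) (G : trigraph V) d cs : wf_trigraph G -> partial_seq G d cs ->
  forall k, k <= size cs -> pinv G (stage G cs k).
Proof.
move=> wf [ps _]; elim=> [|k IH] hk; first by rewrite stage0; exact: inv_lift.
rewrite stageS //; have [h1 h2 h3] := ps k hk; apply: inv_contract => //.
exact: IH (ltnW hk).
Qed.

Definition Idef (V : finType) (a b : 'I_6 -> V) (S : {set V}) (H : ptrigraph V) :=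
  forall P x y, P \in pv H -> x \in P -> y \in P -> x \in VF a b -> y \in VF a b :|: S -> x = y.

Lemma I_stage (V : finType) (G : trigraph V) d cs a b S i :
  partial_seq G d cs -> i < size cs ->
  (forall j, j < i ->
     ~ exists x y, [/\ x \in VF a b, y \in VF a b :|: S & involves (contr cs j) x y]) ->
  forall k, k <= i -> Idef a b S (stage G cs k).
Proof.
move=> [ps _] hi hprev; elim=> [|k IH] hk.
  rewrite stage0 => P x y /imsetP [z _ ->]; rewrite !inE => /eqP -> /eqP -> //.
have hks : k < size cs by apply: leq_trans hk (ltnW hi).
have IH' : Idef a b S (stage G cs k) := IH (ltnW hk).
rewrite /Idef in IH'.
rewrite stageS // => P x y; rewrite in_contract => /orP [/eqP -> | /and3P [_ _ hP]];
  last exact: IH' P x y hP.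
move=> hx hy hxF hyF; move: hx hy; rewrite !inE => hx hy.
have [hu hv _] := ps k hks.
case/orP: hx => hx; case/orP: hy => hy.
- exact: IH' _ x y hu hx hy hxF hyF.
- case: (hprev k hk); exists x, y; split => //; by rewrite /involves hx hy.
- case: (hprev k hk); exists x, y; split => //; by rewrite /involves hx hy orbT.
- exact: IH' _ x y hv hx hy hxF hyF.
Qed.

Definition pt (V : finType) (H : ptrigraph V) (x : V) : {set V} :=
  odflt set0 [pick P in pv H | x \in P].

Lemma ptP (V : finType) (G : trigraph V) H x : pinv G H -> pt H x \in pv H /\ x \in pt H x.
Proof.
case=> _ hc _ _; rewrite /pt; case: pickP => [P /andP [] //| hn].
by have [P hP hx] := hc x; move: (hn P); rewrite hP hx.
Qed.

Definition adjm (V : finType) (G : trigraph V) x y := black G x y || red G x y.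

Definition mixed (V : finType) (G : trigraph V) x1 x2 z :=
  ~~ (black G x1 z && black G x2 z) && ~~ (~~ adjm G x1 z && ~~ adjm G x2 z).

Lemma red_new (V : finType) (G : trigraph V) H (u v y : {set V}) x1 x2 z :
  pinv G H -> u \in pv H -> v \in pv H -> u != v -> y \in pv H -> y != u -> y != v ->
  x1 \in u :|: v -> x2 \in u :|: v -> z \in y -> mixed G x1 x2 z ->
  y \in [set y in pv (contract H u v) | pr (contract H u v) (u :|: v) y].
Proof.
move=> hinv hu hv huv hy hyu hyv hx1 hx2 hz hm.
have hyw := neq_w v hinv hu hy hyu.
have [h0 _ _ hr] := hinv.
have hy0 : y != set0 by apply: contraNneq h0 => <-.
have nu : u != set0 by apply: contraNneq h0 => <-.
have nv : v != set0 by apply: contraNneq h0 => <-.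
rewrite inE in_contract hyu hyv hy (negbTE hyw) /=.
rewrite /contract /= eqxx hyw /=.
have hu' : u != y by rewrite eq_sym.
have hv' : v != y by rewrite eq_sym.
have [e1 e2] := hr _ _ hu hy hu'.
have [e3 e4] := hr _ _ hv hy hv'.
rewrite e1 e2 e3 e4 !ne_simpl; try exact: na_ba.
rewrite /ba /na -!allrelUl.
move/andP: hm => [h1 h2]; apply/andP; split.
  by apply: contra h1 => /allrelP H1; rewrite !H1.
apply: contra h2 => /allrelP H1.
by move: (H1 _ _ hx1 hz) (H1 _ _ hx2 hz); rewrite /adjm !negb_or => -> ->.
Qed.

Lemma count_red (V : finType) (G : trigraph V) H (u v : {set V}) x1 x2 (Z : {set V}) :
  pinv G H -> u \in pv H -> v \in pv H -> u != v ->
  x1 \in u :|: v -> x2 \in u :|: v ->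
  (forall z, z \in Z -> mixed G x1 x2 z) ->
  (forall z, z \in Z -> pt H z != u /\ pt H z != v) ->
  {in Z &, injective (pt H)} ->
  #|Z| <= reddeg (contract H u v) (u :|: v).
Proof.
move=> hinv hu hv huv hx1 hx2 hm hpt hinj.
rewrite /reddeg -(card_in_imset hinj); apply: subset_leq_card.
apply/subsetP => y /imsetP [z hz ->].
have [hp hzp] := ptP z hinv; have [n1 n2] := hpt z hz.
exact: red_new hinv hu hv huv hp n1 n2 hx1 hx2 hzp (hm z hz).
Qed.

Definition emb (V : finType) (a b : 'I_6 -> V) (p : bool * 'I_6) : V :=
  if p.1 then b p.2 else a p.2.

Definition mb (p q : bool * 'I_6) : bool :=
  match p.1, q.1 with
  | false, false | true, true => (p.2.+1 %% 6 == q.2) || (q.2.+1 %% 6 == p.2)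
  | false, true => (p.2 == 5 :> nat) && (q.2 == 0 :> nat)
  | true, false => (q.2 == 5 :> nat) && (p.2 == 0 :> nat)
  end.

Definition mr (p q : bool * 'I_6) : bool :=
  match p.1, q.1 with
  | false, false | true, true => false
  | false, true => (p.2 == q.2 :> nat) || (q.2 == p.2.+1 :> nat)
  | true, false => (q.2 == p.2 :> nat) || (p.2 == q.2.+1 :> nat)
  end.

Lemma emb_black (V : finType) (G : trigraph V) a b p q : wf_trigraph G -> is_fence G a b ->
  black G (emb a b p) (emb a b q) = mb p q.
Proof.
case=> sb _ _ _ _ [_ [[ha hb hab] _]].
move: p q => [[] i] [[] j] /=; rewrite /mb /= ?ha ?hb ?hab //.
by rewrite sb hab.
Qed.

Lemma emb_red (V : finType) (G : trigraph V) a b p q : wf_trigraph G -> is_fence G a b ->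
  red G (emb a b p) (emb a b q) = mr p q.
Proof.
case=> _ sr _ _ _ [_ [_ [ra rb rab]]].
move: p q => [[] i] [[] j] /=; rewrite /mr /= ?ra ?rb ?rab //.
by rewrite sr rab.
Qed.

Definition mmix (p q r : bool * 'I_6) :=
  ~~ (mb p r && mb q r) && ~~ (~~ (mb p r || mr p r) && ~~ (mb q r || mr q r)).
Definition mmixS (p r : bool * 'I_6) :=
  ~~ (mb p r && ~~ r.1) && ~~ (~~ (mb p r || mr p r) && r.1).

Definition o (k : nat) (h : k < 6) : 'I_6 := Ordinal h.
Definition allo : seq 'I_6 :=
  [:: @o 0 erefl; @o 1 erefl; @o 2 erefl; @o 3 erefl; @o 4 erefl; @o 5 erefl].
Definition allp := [seq (b, i) | b <- [:: false; true], i <- allo].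
Lemma alloP i : i \in allo.
Proof. by case: i => [[|[|[|[|[|[|k]]]]]] h]. Qed.
Lemma allpP p : p \in allp.
Proof.
case: p => b i; rewrite /allp; apply/allpairsP; exists (b, i) => /=.
by split => //; [case: b | exact: alloP].
Qed.

Lemma count_card (P : pred (bool * 'I_6)) : count P allp <= #|[set r | P r]|.
Proof.
have hu : uniq allp by vm_compute.
rewrite -size_filter; move/card_uniqP: (filter_uniq P hu) => <-.
by apply: subset_leq_card; apply/subsetP => r; rewrite mem_filter inE => /andP [].
Qed.

Lemma CF1 : all (fun p => all (fun q => (p == q) ||
   ((if p.1 == q.1 then 5 else 3) <= count (fun r => [&& r != p, r != q & mmix p q r]) allp))
   allp) allp.
Proof. by vm_compute. Qed.

Lemma CF2 : all (fun p => 5 <= count (fun r => (r != p) && mmixS p r) allp) allp.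
Proof. by vm_compute. Qed.

Lemma CF1' p q : p != q ->
  (if p.1 == q.1 then 5 else 3) <= #|[set r | [&& r != p, r != q & mmix p q r]]|.
Proof.
move=> hpq; apply: leq_trans (count_card _).
move/allP: CF1 => /(_ p (allpP p)) /allP /(_ q (allpP q)).
by rewrite (negbTE hpq).
Qed.

Lemma CF2' p : 5 <= #|[set r | (r != p) && mmixS p r]|.
Proof.
apply: leq_trans (count_card _).
by move/allP: CF2 => /(_ p (allpP p)).
Qed.

Lemma VF_emb (V : finType) (a b : 'I_6 -> V) x : x \in VF a b -> exists p, x = emb a b p.
Proof.
rewrite /VF inE => /orP [/imsetP [i _ ->] | /imsetP [i _ ->]].
  by exists (false, i).
by exists (true, i).
Qed.

Lemma emb_VF (V : finType) (a b : 'I_6 -> V) p : emb a b p \in VF a b.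
Proof. by case: p => [[] i]; rewrite /VF inE /=; apply/orP; [right|left]; apply: imset_f. Qed.

Lemma emb_inj (V : finType) (G : trigraph V) a b : is_fence G a b -> injective (emb a b).
Proof.
move=> [[ia ib hab] _] [[] i] [[] j]; rewrite /emb /= => e.
- by rewrite (ib i j e).
- by move: (hab j i); rewrite e eqxx.
- by move: (hab i j); rewrite e eqxx.
- by rewrite (ia i j e).
Qed.

Lemma mixed_emb (V : finType) (G : trigraph V) a b p q r : wf_trigraph G -> is_fence G a b ->
  mixed G (emb a b p) (emb a b q) (emb a b r) = mmix p q r.
Proof. by move=> wf fe; rewrite /mixed /adjm !(emb_black _ _ wf fe) !(emb_red _ _ wf fe). Qed.

Lemma S_facts (V : finType) (G : trigraph V) a b S s r : wf_trigraph G ->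
  attached G a b S -> s \in S ->
  black G s (emb a b r) = ~~ r.1 /\ adjm G s (emb a b r) = ~~ r.1.
Proof.
case=> sb sr _ _ _ [_ _ hA hB] hs.
case: r => [[] i] /=; rewrite /adjm sb sr.
  by move: (hB i s hs); rewrite /adj negb_or => /andP [/negbTE -> /negbTE ->].
by rewrite hA.
Qed.

Lemma mixed_S (V : finType) (G : trigraph V) a b S s p r : wf_trigraph G -> is_fence G a b ->
  attached G a b S -> s \in S ->
  mixed G (emb a b p) s (emb a b r) = mmixS p r.
Proof.
move=> wf fe att hs; have [e1 e2] := S_facts r wf att hs.
by rewrite /mixed /adjm -/(adjm G s _) e1 e2 (emb_black _ _ wf fe) (emb_red _ _ wf fe) /mmixS;
  case: (r.1).
Qed.

Lemma mixed_cross (V : finType) (G : trigraph V) a b S s p q :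
  attached G a b S -> s \in S -> p.1 != q.1 ->
  mixed G (emb a b p) (emb a b q) s.
Proof.
case=> _ _ hA hB hs; rewrite /mixed /adjm.
move: p q => [[] i] [[] j] //= _.
- move: (hB i s hs); rewrite /adj negb_or => /andP [/negbTE -> /negbTE ->].
  by rewrite hA.
- move: (hB j s hs); rewrite /adj negb_or => /andP [/negbTE -> /negbTE ->].
  by rewrite hA.
Qed.

Theorem lemma4p8 (V : finType) (G : trigraph V) (a b : 'I_6 -> V) (S : {set V}) :
  wf_trigraph G -> is_fence G a b -> attached G a b S -> attachment_rule G a b S ->
  forall cs : seq ({set V} * {set V}), partial_seq G 4 cs ->
  forall i, i < size cs ->
  (exists x y, [/\ x \in VF a b, y \in VF a b :|: S & involves (contr cs i) x y]) ->
  (forall j, j < i ->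
     ~ exists x y, [/\ x \in VF a b, y \in VF a b :|: S & involves (contr cs j) x y]) ->
  exists P, P \in pv (stage G cs i) /\ S \subset P.
Proof.
move=> wf fe att _ cs ps i hi [x [y [hx hy hinvo]]] hprev.
have hI := I_stage ps hi hprev (leqnn i).
have hP := inv_stage wf ps (ltnW hi).
have [hu hv huv] := ps.1 i hi.
have hmax := ps.2 i.+1 hi; rewrite stageS // in hmax.
move: hI hP hu hv huv hmax hinvo.
set H := stage G cs i; set u := (contr cs i).1; set v := (contr cs i).2.
move=> hI hP hu hv huv hmax hinvo.
have hdeg : reddeg (contract H u v) (u :|: v) <= 4 by apply: hmax; rewrite in_contract eqxx.
case: (boolP [exists P in pv H, S \subset P]) => [/exists_inP [P hP1 hS] | hno];
  first by exists P.
exfalso.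
have [hS0 hSd _ _] := att.
have SnF : forall s, s \in S -> s \notin VF a b by move=> s hs; rewrite (disjointFr hSd hs).
have [hxu hyu] : x \in u :|: v /\ y \in u :|: v.
  by case/orP: hinvo => /andP [h1 h2]; rewrite !inE h1 h2 ?orbT.
have hxy : x != y.
  have [_ _ hd _] := hP.
  apply/eqP => e; subst y; case/orP: hinvo => /andP [h1 h2].
    by move: h2; rewrite (disjointFr (hd _ _ hu hv huv) h1).
  by move: h1; rewrite (disjointFr (hd _ _ hu hv huv) h2).
have hpt : forall z, z \in VF a b :|: S -> z != x -> z != y ->
    (z \in VF a b) || (y \in VF a b) -> pt H z != u /\ pt H z != v.
  move=> z hz hzx hzy hzF; have [hp hzp] := ptP z hP.
  have av : forall Q t, Q \in pv H -> z \in Q -> t \in Q -> (t == x) || (t == y) -> False.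
    move=> Q t hQ hzQ htQ /orP [] /eqP et; subst t.
      by move: hzx; rewrite (hI Q x z hQ htQ hzQ hx hz) eqxx.
    case/orP: hzF => hzF.
      by move: hzy; rewrite (hI Q z y hQ hzQ htQ hzF hy) eqxx.
    by move: hzy; rewrite (hI Q y z hQ htQ hzQ hzF hz) eqxx.
  split; apply/eqP => e; rewrite e in hzp.
    by case/orP: hinvo => /andP [h1 h2]; [apply: (av u x) | apply: (av u y)];
      rewrite ?eqxx ?orbT.
  by case/orP: hinvo => /andP [h1 h2]; [apply: (av v y) | apply: (av v x)];
    rewrite ?eqxx ?orbT.
have injF : forall z1 z2, z1 \in VF a b :|: S -> z2 \in VF a b :|: S ->
    (z1 \in VF a b) || (z2 \in VF a b) -> pt H z1 = pt H z2 -> z1 = z2.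
  move=> z1 z2 h1 h2 hF e; have [hp1 hz1] := ptP z1 hP; have [hp2 hz2] := ptP z2 hP.
  rewrite -e in hz2.
  case/orP: hF => hF; first exact: hI _ _ _ hp1 hz1 hz2 hF h2.
  by apply/esym; exact: hI _ _ _ hp1 hz2 hz1 hF h1.
have [p ep] := VF_emb hx.
have [s1 hs1] := set0Pn _ hS0.
have [hp1 hs1p] := ptP s1 hP.
have : ~~ (S \subset pt H s1).
  by apply: contra hno => hsub; apply/exists_inP; exists (pt H s1).
case/subsetPn => s2 hs2 hs2n.
have [hp2 hs2p] := ptP s2 hP.
have s12 : s1 != s2 by apply: contraNneq hs2n => <-.
have pne : pt H s1 != pt H s2 by apply: contraNneq hs2n => ->.
have sx : forall s, s \in S -> forall t, t \in VF a b -> s != t.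
  by move=> s hs t ht; apply/eqP => e; move: (SnF s hs); rewrite e ht.
have einj := emb_inj fe.
have embVFS : forall r, emb a b r \in VF a b :|: S by move=> r; rewrite inE emb_VF.
case/setUP: (hy) => [hyF | hyS].
- have [q eq] := VF_emb hyF.
  have hpq : p != q by apply: contraNneq hxy => e; rewrite ep eq e.
  have mixT : forall r, r != p -> r != q -> pt H (emb a b r) != u /\ pt H (emb a b r) != v.
    move=> r hrp hrq; apply: hpt => //; last by rewrite hyF orbT.
      by rewrite ep (inj_eq einj).
    by rewrite eq (inj_eq einj).
  set T := [set r | [&& r != p, r != q & mmix p q r]].
  have cT := CF1' hpq.
  have hTE : #|emb a b @: T| = #|T| by apply: card_imset.
  have mT : forall z, z \in emb a b @: T -> mixed G x y z.
    move=> z /imsetP [r hr ->]; rewrite ep eq mixed_emb //.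
    by move: hr; rewrite inE => /and3P [].
  have pT : forall z, z \in emb a b @: T -> pt H z != u /\ pt H z != v.
    by move=> z /imsetP [r hr ->]; move: hr; rewrite inE => /and3P [h1 h2 _]; exact: mixT.
  case: (boolP (p.1 == q.1)) => hpq1; [rewrite hpq1 in cT | rewrite (negbTE hpq1) in cT].
  + have : #|emb a b @: T| <= 4.
      apply: (leq_trans _ hdeg); apply: (count_red hP hu hv huv hxu hyu mT pT).
      move=> z1 z2 /imsetP [r1 _ ->] /imsetP [r2 _ ->]; apply: injF; by rewrite ?embVFS ?emb_VF.
    by rewrite hTE leqNgt (leq_trans _ cT).
  + have hsZ : forall s, s \in S -> s \notin emb a b @: T.
      by move=> s hs; apply/negP => /imsetP [r _ e]; move: (SnF s hs); rewrite e emb_VF.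
    have : #|s1 |: (s2 |: emb a b @: T)| <= 4.
      apply: (leq_trans _ hdeg); apply: (count_red hP hu hv huv hxu hyu).
      * move=> z; rewrite !in_setU1 => /orP [/eqP -> | /orP [/eqP -> | hz]];
          last exact: mT.
          by rewrite ep eq; exact: (mixed_cross att hs1 hpq1).
        by rewrite ep eq; exact: (mixed_cross att hs2 hpq1).
      * move=> z; rewrite !in_setU1 => /orP [/eqP -> | /orP [/eqP -> | hz]];
          last exact: pT.
          apply: hpt; rewrite ?hyF ?orbT ?sx //; by rewrite inE hs1 orbT.
        apply: hpt; rewrite ?hyF ?orbT ?sx //; by rewrite inE hs2 orbT.
      * move=> z1 z2 h1 h2 e.
        have hsS : forall z, z \in s1 |: (s2 |: emb a b @: T) -> z \in VF a b :|: S.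
          move=> z; rewrite !in_setU1 => /orP [/eqP -> | /orP [/eqP -> | /imsetP [r _ ->]]];
            by rewrite inE ?hs1 ?hs2 ?emb_VF ?orbT.
        have vT : forall z, z \in emb a b @: T -> z \in VF a b.
          by move=> z /imsetP [r _ ->]; exact: emb_VF.
        case: (boolP (z1 \in VF a b)) => f1.
          by apply: injF (hsS _ h1) (hsS _ h2) _ e; rewrite f1.
        case: (boolP (z2 \in VF a b)) => f2.
          by apply: injF (hsS _ h1) (hsS _ h2) _ e; rewrite f2 orbT.
        move: h1 h2; rewrite !in_setU1 => /orP [/eqP e1 | /orP [/eqP e1 | h1]];
          last by rewrite vT in f1.
        1,2: move=> /orP [/eqP e2 | /orP [/eqP e2 | h2]]; last by rewrite vT in f2.
        1-4: subst => //.
        1,2: by rewrite e eqxx in pne.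
    rewrite !cardsU1 hTE (negbTE (hsZ s2 hs2)) in_setU1 (negbTE s12) (negbTE (hsZ s1 hs1)).
    by rewrite /= !add1n !ltnS => h; move: (leq_trans cT h).
- set T := [set r | (r != p) && mmixS p r].
  have cT := CF2' p.
  have hTE : #|emb a b @: T| = #|T| by apply: card_imset.
  have : #|emb a b @: T| <= 4.
    apply: (leq_trans _ hdeg); apply: (count_red hP hu hv huv hxu hyu).
    + move=> z /imsetP [r hr ->]; rewrite ep (mixed_S _ _ wf fe att hyS).
      by move: hr; rewrite inE => /andP [].
    + move=> z /imsetP [r hr ->]; move: hr; rewrite inE => /andP [hr _].
      apply: hpt; rewrite ?emb_VF //; first by rewrite ep (inj_eq einj).
      by rewrite eq_sym sx // emb_VF.
    + move=> z1 z2 /imsetP [r1 _ ->] /imsetP [r2 _ ->]; apply: injF; by rewrite ?embVFS ?emb_VF.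
  by rewrite hTE leqNgt (leq_trans _ cT).
Qed.
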